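(* Let $k\neq 1$ be real, and put the real Hesse curve $\mathcal{C}(k)_{\mathbb{R}}=\{x^3+y^3+z^3=3k\,xyz\}\subset\mathbb{P}^2(\mathbb{R})$ into the standard normal form $y^2=x^3+ax+b$ ($a,b\in\mathbb{R}$) by a real projective transformation. Then $b<0$ if and only if $1-\sqrt3<k<1+\sqrt3$; $b=0$ if and only if $k=1\pm\sqrt3$; and $b>0$ otherwise.
   Context: The affine equation $y^2=x^3+ax+b$ denotes the curve $-y^2z+x^3+axz^2+bz^3=0$. Real projective transformations between standard normal forms fixing $(0:1:0)$ replace $(a,b)$ by $(t^4a,t^6b)$ with $t$ real non-zero, so the sign of $b$ is well defined. *)

(* Defs.v *)
From HB Require Import structures.
From mathcomp Require Import all_boot all_order all_algebra.
Set Implicit Arguments. Unset Strict Implicit. Unset Printing Implicit Defensive.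
Import Order.TTheory GRing.Theory Num.Theory.
Local Open Scope ring_scope.

Definition cx {R : ringType} (v : 'cV[R]_3) : R := v (@inord 2 0) ord0.
Definition cy {R : ringType} (v : 'cV[R]_3) : R := v (@inord 2 1) ord0.
Definition cz {R : ringType} (v : 'cV[R]_3) : R := v (@inord 2 2) ord0.

Definition hesse_form {R : comRingType} (k : R) (v : 'cV[R]_3) : R :=
  cx v ^+ 3 + cy v ^+ 3 + cz v ^+ 3 - 3%:R * k * cx v * cy v * cz v.

(* The standard normal form  -y^2 z + x^3 + a x z^2 + b z^3
   (projective version of y^2 = x^3 + a x + b). *)
Definition weier_form {R : comRingType} (a b : R) (v : 'cV[R]_3) : R :=
  - cy v ^+ 2 * cz v + cx v ^+ 3 + a * cx v * cz v ^+ 2 + b * cz v ^+ 3.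

(* The real projective transformation given by the invertible matrix M
   carries the Hesse curve C(k) onto the normal form curve of (a,b):
   the pulled-back cubic equation is a nonzero multiple of the Hesse one. *)
Definition puts_in_normal_form {R : fieldType} (k : R) (M : 'M[R]_3) (a b : R) :=
  M \in unitmx /\
  exists2 lam : R, lam != 0 &
    forall v : 'cV[R]_3, hesse_form k v = lam * weier_form a b (M *m v).

(* Main.v *)
Require Import Defs.
From HB Require Import structures.
From mathcomp Require Import all_boot all_order all_algebra.
Import Order.TTheory GRing.Theory Num.Theory.
Local Open Scope ring_scope.

From mathcomp Require Import ring lra.
Set Implicit Arguments. Unset Strict Implicit.

Lemma cubic0 (R : realFieldType) (e1 e2 e3 e4 e5 e6 e7 e8 e9 e10 : R) :
  (forall x y z : R, e1*x^+3 + e2*y^+3 + e3*z^+3 + e4*x^+2*y + e5*x^+2*z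
     + e6*y^+2*x + e7*y^+2*z + e8*z^+2*x + e9*z^+2*y + e10*x*y*z = 0) ->
  e1 = 0 /\ e2 = 0 /\ e3 = 0 /\ e4 = 0 /\ e5 = 0 /\ e6 = 0 /\ e7 = 0 /\ e8 = 0 /\ e9 = 0 /\ e10 = 0.
Proof.
move=> H.
have h100 := H 1 0 0; have h010 := H 0 1 0; have h001 := H 0 0 1.
have h110 := H 1 1 0; have h1m0 := H 1 (-1) 0.
have h101 := H 1 0 1; have h10m := H 1 0 (-1).
have h011 := H 0 1 1; have h01m := H 0 1 (-1).
have h111 := H 1 1 1.
rewrite !(expr0n, expr1n, mul0r, mulr0, mul1r, mulr1, addr0, add0r, sqrrN, exprN1) in h100 h010 h001 h110 h1m0 h101 h10m h011 h01m h111 *.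
lra.
Qed.

Definition hf {R : comRingType} (k x y z : R) := x^+3 + y^+3 + z^+3 - 3%:R*k*x*y*z.
Definition Tm {R : comRingType} (k x1 y1 z1 x2 y2 z2 x3 y3 z3 : R) :=
  2%:R*(x1*x2*x3 + y1*y2*y3 + z1*z2*z3)
  - k*(x1*y2*z3 + x1*z2*y3 + y1*x2*z3 + y1*z2*x3 + z1*x2*y3 + z1*y2*x3).
Definition wf {R : comRingType} (a b x y z : R) := - y^+2*z + x^+3 + a*x*z^+2 + b*z^+3.

Lemma coefs (R : realFieldType) (k lam a b p1 q1 r1 p2 q2 r2 p3 q3 r3 : R) :
  (forall w0 w1 w2 : R, hf k (p1*w0+p2*w1+p3*w2) (q1*w0+q2*w1+q3*w2) (r1*w0+r2*w1+r3*w2)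
      = lam * wf a b w0 w1 w2) ->
  hf k p1 q1 r1 = lam /\ hf k p2 q2 r2 = 0 /\ hf k p3 q3 r3 = lam * b /\
  Tm k p1 q1 r1 p1 q1 r1 p2 q2 r2 = 0 /\
  Tm k p1 q1 r1 p1 q1 r1 p3 q3 r3 = 0 /\
  Tm k p2 q2 r2 p2 q2 r2 p1 q1 r1 = 0 /\
  3%:R * Tm k p2 q2 r2 p2 q2 r2 p3 q3 r3 = - 2%:R * lam /\
  3%:R * Tm k p3 q3 r3 p3 q3 r3 p1 q1 r1 = 2%:R * lam * a /\
  Tm k p3 q3 r3 p3 q3 r3 p2 q2 r2 = 0 /\
  Tm k p1 q1 r1 p2 q2 r2 p3 q3 r3 = 0.
Proof.
move=> Hid.
have := @cubic0 R (2%:R * hf k p1 q1 r1 - 2%:R * lam) (2%:R * hf k p2 q2 r2)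
  (2%:R * hf k p3 q3 r3 - 2%:R * lam * b)
  (3%:R * Tm k p1 q1 r1 p1 q1 r1 p2 q2 r2)
  (3%:R * Tm k p1 q1 r1 p1 q1 r1 p3 q3 r3)
  (3%:R * Tm k p2 q2 r2 p2 q2 r2 p1 q1 r1)
  (3%:R * Tm k p2 q2 r2 p2 q2 r2 p3 q3 r3 + 2%:R * lam)
  (3%:R * Tm k p3 q3 r3 p3 q3 r3 p1 q1 r1 - 2%:R * lam * a)
  (3%:R * Tm k p3 q3 r3 p3 q3 r3 p2 q2 r2)
  (6%:R * Tm k p1 q1 r1 p2 q2 r2 p3 q3 r3).
case.
  move=> x y z.
  transitivity (2%:R * (hf k (p1*x+p2*y+p3*z) (q1*x+q2*y+q3*z) (r1*x+r2*y+r3*z)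
      - lam * wf a b x y z)); last by rewrite Hid subrr mulr0.
  rewrite /hf /Tm /wf; ring.
move=> e1 [e2 [e3 [e4 [e5 [e6 [e7 [e8 [e9 e10]]]]]]]].
split; first lra. split; first lra. split; first lra. split; first lra.
split; first lra. split; first lra. split; first lra. split; first lra.
split; lra.
Qed.

Definition HID {R : realFieldType} (k lam a b p1 q1 r1 p2 q2 r2 p3 q3 r3 : R) :=
  forall w0 w1 w2 : R, hf k (p1*w0+p2*w1+p3*w2) (q1*w0+q2*w1+q3*w2) (r1*w0+r2*w1+r3*w2)
      = lam * wf a b w0 w1 w2.
Definition HINJ {R : realFieldType} (p1 q1 r1 p2 q2 r2 p3 q3 r3 : R) :=
  forall u1 u2 u3 : R, u1* p1+u2*q1+u3*r1 = 0 -> u1* p2+u2*q2+u3*r2 = 0 ->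
    u1* p3+u2*q3+u3*r3 = 0 -> u1 = 0 /\ u2 = 0 /\ u3 = 0.

Lemma step_u (R : realFieldType) (k lam a b p1 q1 r1 p2 q2 r2 p3 q3 r3 : R) :
  HID k lam a b p1 q1 r1 p2 q2 r2 p3 q3 r3 -> HINJ p1 q1 r1 p2 q2 r2 p3 q3 r3 ->
  2%:R* p2* p1 - k*r2*q1 - k*q2*r1 = 0 /\
  - k*r2* p1 + 2%:R*q2*q1 - k* p2*r1 = 0 /\
  - k*q2* p1 - k* p2*q1 + 2%:R*r2*r1 = 0.
Proof.
move=> Hid Hinj.
have [C300 [C030 [C003 [C210 [C201 [C120 [C021 [C102 [C012 C111]]]]]]]]] := coefs Hid.
apply: Hinj.
- transitivity (Tm k p1 q1 r1 p1 q1 r1 p2 q2 r2); [rewrite /Tm; ring | exact C210].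
- transitivity (Tm k p2 q2 r2 p2 q2 r2 p1 q1 r1); [rewrite /Tm; ring | exact C120].
- transitivity (Tm k p1 q1 r1 p2 q2 r2 p3 q3 r3); [rewrite /Tm; ring | exact C111].
Qed.

Lemma k3 (R : realFieldType) (k : R) : k != 1 -> k^+3 != 1.
Proof.
move=> hk; apply/negP => /eqP h.
have e : (k - 1) * (k^+2 + k + 1) = k^+3 - 1 by ring.
have : (k - 1) * (k^+2 + k + 1) = 0 by rewrite e h subrr.
move/eqP; rewrite mulf_eq0 => /orP [] /eqP h1.
  by move: hk; rewrite (_ : k = 1) ?eqxx //; lra.
nra.
Qed.

Lemma flexpt (R : realFieldType) (k lam a b p1 q1 r1 p2 q2 r2 p3 q3 r3 : R) :
  k != 1 -> lam != 0 ->
  HID k lam a b p1 q1 r1 p2 q2 r2 p3 q3 r3 -> HINJ p1 q1 r1 p2 q2 r2 p3 q3 r3 ->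
  p2 * q2 * r2 = 0.
Proof.
move=> hk hl Hid Hinj.
have [C300 [C030 _]] := coefs Hid.
have [u1 [u2 u3]] := step_u Hid Hinj.
set d := 8%:R * (p2*q2*r2) * (1 - k^+3).
have dp1 : d * p1 = 0.
  transitivity ((2%:R*q2*(2%:R*r2) - k* p2*(k* p2)) * (2%:R* p2* p1 - k*r2*q1 - k*q2*r1)
     + (k*q2*k* p2 + k*r2*(2%:R*r2)) * (- k*r2* p1 + 2%:R*q2*q1 - k* p2*r1)
     + (k*r2*k* p2 + k*q2*(2%:R*q2)) * (- k*q2* p1 - k* p2*q1 + 2%:R*r2*r1)
     + 2%:R * k^+2 * hf k p2 q2 r2 * p1).
    rewrite /d /hf; ring.
  by rewrite u1 u2 u3 C030; ring.
have dq1 : d * q1 = 0.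
  transitivity ((k* p2*k*q2 + k*r2*(2%:R*r2)) * (2%:R* p2* p1 - k*r2*q1 - k*q2*r1)
     + (2%:R* p2*(2%:R*r2) - k*q2*k*q2) * (- k*r2* p1 + 2%:R*q2*q1 - k* p2*r1)
     + (k*q2*k*r2 + 2%:R* p2*k* p2) * (- k*q2* p1 - k* p2*q1 + 2%:R*r2*r1)
     + 2%:R * k^+2 * hf k p2 q2 r2 * q1).
    rewrite /d /hf; ring.
  by rewrite u1 u2 u3 C030; ring.
have dr1 : d * r1 = 0.
  transitivity ((k*r2*k* p2 + 2%:R*q2*k*q2) * (2%:R* p2* p1 - k*r2*q1 - k*q2*r1)
     + (k*r2*k*q2 + 2%:R* p2*k* p2) * (- k*r2* p1 + 2%:R*q2*q1 - k* p2*r1)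
     + (2%:R* p2*(2%:R*q2) - k*r2*k*r2) * (- k*q2* p1 - k* p2*q1 + 2%:R*r2*r1)
     + 2%:R * k^+2 * hf k p2 q2 r2 * r1).
    rewrite /d /hf; ring.
  by rewrite u1 u2 u3 C030; ring.
have hd : d = 0.
  apply/eqP/negPn/negP => hd.
  have [h1 h2 h3] : [/\ p1 = 0, q1 = 0 & r1 = 0].
    by split; apply/eqP; [move: dp1 | move: dq1 | move: dr1];
       move/eqP; rewrite mulf_eq0 (negPf hd).
  by move: hl; rewrite -C300 h1 h2 h3 /hf; rewrite (_ : _ - _ = 0) ?eqxx //; ring.
move: hd; rewrite /d => /eqP; rewrite !mulf_eq0 pnatr_eq0 /= subr_eq0.
have := k3 hk; rewrite eq_sym => /negPf ->.
by rewrite orbF -!mulf_eq0 => /eqP.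
Qed.

Lemma sq_pos (R : realFieldType) (x : R) : x != 0 -> 0 < x ^+ 2.
Proof. by move=> hx; rewrite exprn_even_gt0 //= hx orbT. Qed.

Lemma cancelz (R : idomainType) (x z : R) : x != 0 -> x * z = 0 -> z = 0.
Proof. by move=> hx /eqP; rewrite mulf_eq0 (negPf hx) => /eqP. Qed.

Lemma core (R : realFieldType) (k lam a b p1 q1 r1 p2 q2 p3 q3 r3 : R) :
  k != 1 -> lam != 0 ->
  HID k lam a b p1 q1 r1 p2 q2 0 p3 q3 r3 -> HINJ p1 q1 r1 p2 q2 0 p3 q3 r3 ->
  exists2 c, 0 < c & b = c * (k^+6 - 20%:R * k^+3 - 8%:R).
Proof.
move=> hk hl Hid Hinj.
have [C300 [C030 [C003 [C210 [C201 [C120 [C021 [C102 [C012 C111]]]]]]]]] := coefs Hid.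
have [u1 [u2 u3]] := step_u Hid Hinj.
have hq2 : q2 = - p2.
  have e : (p2 + q2) * (p2^+2 - p2 * q2 + q2^+2) = 0 by rewrite -[RHS]C030 /hf; ring.
  move: e => /eqP; rewrite mulf_eq0 => /orP [] /eqP e; first lra.
  have e' : (2%:R * p2 - q2)^+2 + 3%:R * q2^+2 = 0.
    by rewrite -[RHS](mulr0 4%:R) -[in RHS]e; ring.
  have hq : q2^+2 = 0 by have := sqr_ge0 (2%:R * p2 - q2); have := sqr_ge0 q2; lra.
  have hp : (2%:R * p2 - q2)^+2 = 0 by have := sqr_ge0 (2%:R * p2 - q2); have := sqr_ge0 q2; lra.
  move/eqP: hq; rewrite expf_eq0 /= => /eqP hq.
  move/eqP: hp; rewrite expf_eq0 /= => /eqP hp.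
  lra.
subst q2.
have hx : p2 != 0.
  apply/negP => /eqP h0.
  have T0 : Tm k p2 (- p2) 0 p2 (- p2) 0 p3 q3 r3 = 0 by rewrite h0 /Tm; ring.
  by move: hl; rewrite (_ : lam = 0) ?eqxx //; lra.
have e1 : p2 * (2%:R * p1 + k * r1) = 0 by rewrite -[RHS]u1; ring.
have h1 : 2%:R * p1 + k * r1 = 0 by move/eqP: e1; rewrite mulf_eq0 (negPf hx) => /eqP.
have e2 : p2 * (2%:R * q1 + k * r1) = 0.
  by rewrite -[RHS]oppr0 -[in RHS]u2; ring.
have h2 : 2%:R * q1 + k * r1 = 0 by move/eqP: e2; rewrite mulf_eq0 (negPf hx) => /eqP.
have [s [hp1 [hq1 hr1]]] : exists s, p1 = k * s /\ q1 = k * s /\ r1 = - 2%:R * s.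
  exists (- r1 / 2%:R); split; last split.
  - rewrite (_ : p1 = (2%:R * p1) / 2%:R); last by field => //.
    rewrite (_ : 2%:R * p1 = - (k * r1)); [field => // | lra].
  - rewrite (_ : q1 = (2%:R * q1) / 2%:R); last by field => //.
    rewrite (_ : 2%:R * q1 = - (k * r1)); [field => // | lra].
  - by field => //.
subst p1 q1 r1.
have hs : s != 0.
  apply/negP => /eqP h0.
  by move: hl; rewrite -C300 h0 /hf; apply/negP; rewrite negbK; apply/eqP; ring.
have hT1 : Tm k p2 (- p2) 0 p2 (- p2) 0 p3 q3 r3 = 2%:R * p2^+2 * (p3 + q3 + k * r3).
  by rewrite /Tm; ring.
have hT2 : Tm k p3 q3 r3 p3 q3 r3 p2 (- p2) 0 = 2%:R * p2 * (p3 - q3) * (p3 + q3 + k * r3).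
  by rewrite /Tm; ring.
have hal : p3 + q3 + k * r3 != 0.
  apply/negP => /eqP h0.
  move: C021; rewrite hT1 h0 mulr0 mulr0 => h.
  by move: hl; rewrite (_ : lam = 0) ?eqxx //; lra.
have hq3 : q3 = p3.
  move: C012; rewrite hT2 => /eqP; rewrite !mulf_eq0 (negPf hx) (negPf hal) pnatr_eq0 /=.
  by rewrite orbF subr_eq0 => /eqP.
subst q3.
have hT3 : Tm k (k * s) (k * s) (- 2%:R * s) (k * s) (k * s) (- 2%:R * s) p3 p3 r3
    = 2%:R * s^+2 * (6%:R * k^+2 * p3 + (4%:R - k^+3) * r3).
  by rewrite /Tm; ring.
have hL : 6%:R * k^+2 * p3 + (4%:R - k^+3) * r3 = 0.
  apply: (@cancelz _ (2%:R * s^+2)); last by rewrite -hT3.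
  by rewrite mulf_neq0 ?pnatr_eq0 // expf_neq0.
have [t [hp3 hr3]] : exists t, p3 = t * (4%:R - k^+3) /\ r3 = - (6%:R * k^+2) * t.
  case: (eqVneq (4%:R - k^+3) 0) => hE.
  - have hk0 : k != 0.
      apply/negP => /eqP k0; move: hE; rewrite k0 expr0n /= subr0 => /eqP.
      by rewrite pnatr_eq0.
    have hp : p3 = 0.
      apply: (@cancelz _ (6%:R * k^+2)); last by move: hL; rewrite hE mul0r addr0.
      by rewrite mulf_neq0 ?pnatr_eq0 // expf_neq0.
    exists (- r3 / (6%:R * k^+2)); split; first by rewrite hE mulr0.
    field; rewrite ?mulf_neq0 ?pnatr_eq0 // expf_neq0.
  - exists (p3 / (4%:R - k^+3)); split; first by field => //.
    rewrite -[r3](mulKf hE) (_ : (4%:R - k^+3) * r3 = - (6%:R * k^+2 * p3)); last by lra.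
    field => //.
subst p3 r3.
have hlam : lam = 24%:R * p2^+2 * t * (k^+3 - 1).
  move: C021; rewrite hT1 => h.
  apply: (@mulfI _ (- 2%:R)); first by rewrite oppr_eq0 pnatr_eq0.
  rewrite -h; ring.
have ht : t != 0.
  apply/negP => /eqP h0; move: hl; rewrite hlam h0 mulr0 mul0r eqxx //.
exists (2%:R * t^+2 / (3%:R * p2^+2)).
  by rewrite divr_gt0 // mulr_gt0 ?ltr0n ?sq_pos.
apply: (mulfI hl); rewrite -C003 {1}hlam /hf.
field; rewrite hx //.
Qed.

Lemma scalar_main (R : realFieldType) (k lam a b p1 q1 r1 p2 q2 r2 p3 q3 r3 : R) :
  k != 1 -> lam != 0 ->
  HID k lam a b p1 q1 r1 p2 q2 r2 p3 q3 r3 -> HINJ p1 q1 r1 p2 q2 r2 p3 q3 r3 ->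
  exists2 c, 0 < c & b = c * (k^+6 - 20%:R * k^+3 - 8%:R).
Proof.
move=> hk hl Hid Hinj.
have := flexpt hk hl Hid Hinj.
move/eqP; rewrite !mulf_eq0 => /orP [/orP [] | ] /eqP h.
- subst p2.
  apply: (@core _ k lam a b q1 r1 p1 q2 r2 q3 r3 p3 hk hl).
  + by move=> w0 w1 w2; rewrite -(Hid w0 w1 w2) /hf; ring.
  + move=> u1 u2 u3 e1 e2 e3.
    case: (Hinj u3 u1 u2 _ _ _).
    * by rewrite -[RHS]e1; ring.
    * by rewrite -[RHS]e2; ring.
    * by rewrite -[RHS]e3; ring.
    by move=> -> [-> ->].
- subst q2.
  apply: (@core _ k lam a b r1 p1 q1 r2 p2 r3 p3 q3 hk hl).
  + by move=> w0 w1 w2; rewrite -(Hid w0 w1 w2) /hf; ring.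
  + move=> u1 u2 u3 e1 e2 e3.
    case: (Hinj u2 u3 u1 _ _ _).
    * by rewrite -[RHS]e1; ring.
    * by rewrite -[RHS]e2; ring.
    * by rewrite -[RHS]e3; ring.
    by move=> -> [-> ->].
- subst r2. exact: core hk hl Hid Hinj.
Qed.

Lemma ord3P (j : 'I_3) : j = inord 0 \/ j = inord 1 \/ j = inord 2.
Proof.
case: j => [[|[|[|m]]] hm].
- by left; apply/val_inj; rewrite /= inordK.
- by right; left; apply/val_inj; rewrite /= inordK.
- by right; right; apply/val_inj; rewrite /= inordK.
- by [].
Qed.

Lemma sum3 (R : nmodType) (F : 'I_3 -> R) :
  \sum_(i < 3) F i = F (inord 0) + F (inord 1) + F (inord 2).
Proof.
rewrite !big_ord_recl big_ord0 addr0 addrA.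
by congr (F _ + F _ + F _); apply/val_inj; rewrite /= inordK.
Qed.

Definition wv {R : ringType} (w0 w1 w2 : R) : 'cV[R]_3 := \col_i [:: w0; w1; w2]`_i.

Lemma mulv (R : comRingType) (N : 'M[R]_3) (w0 w1 w2 : R) i :
  (N *m wv w0 w1 w2) i ord0 = N i (inord 0) * w0 + N i (inord 1) * w1 + N i (inord 2) * w2.
Proof. by rewrite mxE sum3 !mxE !inordK. Qed.

Lemma sign_part (R : rcfType) (k b c : R) : 0 < c ->
  b = c * (k^+6 - 20%:R * k^+3 - 8%:R) ->
  [/\ (b < 0 <-> 1 - Num.sqrt 3%:R < k < 1 + Num.sqrt 3%:R),
      (b = 0 <-> k = 1 - Num.sqrt 3%:R \/ k = 1 + Num.sqrt 3%:R) &
      (0 < b <-> k < 1 - Num.sqrt 3%:R \/ 1 + Num.sqrt 3%:R < k)].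
Proof.
move=> hc hb.
set s := Num.sqrt 3%:R.
have hs2 : s^+2 = 3%:R by rewrite sqr_sqrtr // ler0n.
have hs : 0 < s by rewrite sqrtr_gt0 ltr0n.
set al := 1 - s; set be := 1 + s.
have hal : al != 0 by apply/negP => /eqP h; move: hs2; rewrite (_ : s = 1); [lra | rewrite /al in h; lra].
have hbe : be != 0 by apply/negP => /eqP h; rewrite /be in h; lra.
have P1 : 0 < k^+2 + k * al + al^+2.
  have := sq_pos hal; have := sqr_ge0 (2%:R * k + al); nra.
have P2 : 0 < k^+2 + k * be + be^+2.
  have := sq_pos hbe; have := sqr_ge0 (2%:R * k + be); nra.
have eQ : k^+6 - 20%:R * k^+3 - 8%:R
   = ((k^+2 + k * al + al^+2) * (k^+2 + k * be + be^+2)) * ((k - al) * (k - be)).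
  have -> : ((k^+2 + k * al + al^+2) * (k^+2 + k * be + be^+2)) * ((k - al) * (k - be))
      = k^+6 - k^+3 * (2%:R + 6%:R * s^+2) + (1 - s^+2)^+3.
    by rewrite /al /be; ring.
  by rewrite hs2; ring.
have hd : 0 < c * ((k^+2 + k * al + al^+2) * (k^+2 + k * be + be^+2)) by rewrite !mulr_gt0.
move: hb; rewrite eQ mulrA; set d := c * _ => hb; move: hd; rewrite -/d => hd.
have hab : al < be by rewrite /al /be; lra.
clearbody al be d.
split.
- rewrite hb pmulr_rlt0 //; split.
  + move=> h; apply/andP; split; nra.
  + by case/andP => h1 h2; nra.
- rewrite hb; split.
  + move/eqP; rewrite mulf_eq0 (gt_eqF hd) /= mulf_eq0 !subr_eq0.
    by case/orP => /eqP ->; [left | right].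
  + by case=> ->; rewrite subrr ?mulr0 ?mul0r ?mulr0.
- rewrite hb pmulr_rgt0 //; split.
  + move=> h; case: (ltrP k al) => h1; first by left.
    by right; nra.
  + by case=> h; nra.
Qed.

Unset Implicit Arguments. Set Strict Implicit.
Theorem lemma6p4 (R : rcfType) (k : R) (M : 'M[R]_3) (a b : R) :
  k != 1 ->
  puts_in_normal_form k M a b ->
  [/\ (b < 0 <-> 1 - Num.sqrt 3%:R < k < 1 + Num.sqrt 3%:R),
      (b = 0 <-> k = 1 - Num.sqrt 3%:R \/ k = 1 + Num.sqrt 3%:R) &
      (0 < b <-> k < 1 - Num.sqrt 3%:R \/ 1 + Num.sqrt 3%:R < k)].
Proof.
move=> hk [hM [lam hl Hm]].
set N := invmx M.
have HI : HID k lam a b (N (inord 0) (inord 0)) (N (inord 1) (inord 0)) (N (inord 2) (inord 0))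
   (N (inord 0) (inord 1)) (N (inord 1) (inord 1)) (N (inord 2) (inord 1))
   (N (inord 0) (inord 2)) (N (inord 1) (inord 2)) (N (inord 2) (inord 2)).
  move=> w0 w1 w2.
  have := Hm (N *m wv w0 w1 w2).
  rewrite mulmxA mulmxV // mul1mx /hesse_form /weier_form /cx /cy /cz !mulv !mxE !inordK //=.
have HJ : HINJ (N (inord 0) (inord 0)) (N (inord 1) (inord 0)) (N (inord 2) (inord 0))
   (N (inord 0) (inord 1)) (N (inord 1) (inord 1)) (N (inord 2) (inord 1))
   (N (inord 0) (inord 2)) (N (inord 1) (inord 2)) (N (inord 2) (inord 2)).
  move=> u1 u2 u3 e1 e2 e3.
  pose U : 'rV[R]_3 := \row_j [:: u1; u2; u3]`_j.
  have hUN : U *m N = 0.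
    apply/matrixP => i j; rewrite !mxE sum3 !mxE !inordK //=.
    by case: (ord3P j) => [->|[->|->]]; [rewrite e1 | rewrite e2 | rewrite e3].
  have hU : U = 0 by rewrite -[U]mulmx1 -(mulVmx hM) mulmxA hUN mul0mx.
  have g := fun j => congr1 (fun A : 'rV[R]_3 => A ord0 (inord j)) hU.
  have := g 0%N; have := g 1%N; have := g 2%N; rewrite !mxE !inordK //=.
have [c hc hb] := scalar_main hk hl HI HJ.
exact: sign_part hc hb.
Qed.
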